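(* Let $B_0,\ldots,B_{m-1}$ be $d \times d$ real matrices, and suppose that $x \in \Sigma_m^\omega$ is very weakly extremal for $\mathcal{B}=\{B_0,\ldots,B_{m-1}\}$. Then there exists $y \in \Sigma_m^\omega$ which is recurrent and strongly extremal for $\mathcal{B}$, and satisfies $\mathcal L(y)\subseteq\mathcal L(x)$.
   Context: $\Sigma_m=\{0,\ldots,m-1\}$, $\Sigma_m^\omega$ is the set of infinite sequences $x=x_1x_2\cdots$ over $\Sigma_m$. A subword of $x$ is a finite word $x_{k+1}\cdots x_{k+n}$ with $k\ge0$, $n\ge1$; $\mathcal L(x)$ denotes the set of all subwords of $x$. A sequence is recurrent if every one of its subwords occurs infinitely many times in it. The joint spectral radius is $\varrho(\mathcal{B})=\lim_{n\to\infty}\max\{\|B_{i_1}\cdots B_{i_n}\|^{1/n}: i_j\in\Sigma_m\}$, with $\|\cdot\|$ the Euclidean operator norm. A sequence $x$ is strongly extremal for $\mathcal{B}$ if there is $\delta>0$ with $\|B_{x_n}\cdots B_{x_1}\|\ge\delta\varrho(\mathcal{B})^n$ for all $n\ge1$, and very weakly extremal for $\mathcal{B}$ if $\limsup_{n\to\infty}\|B_{x_n}\cdots B_{x_1}\|^{1/n}=\varrho(\mathcal{B})$. *)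

(* Defs.v *)
From HB Require Import structures.
From mathcomp Require Import all_boot all_order all_algebra.
From mathcomp Require Import all_classical all_reals all_analysis.
Set Implicit Arguments. Unset Strict Implicit. Unset Printing Implicit Defensive.
Import Order.TTheory GRing.Theory Num.Theory.
Local Open Scope ring_scope.
Local Open Scope classical_set_scope.

Definition eucl {R : realType} {d : nat} (v : 'cV[R]_d) : R :=
  Num.sqrt (\sum_(i < d) v i 0 ^+ 2).

Definition opnorm {R : realType} {d : nat} (A : 'M[R]_d) : R :=
  sup [set eucl (A *m v) | v in [set v : 'cV[R]_d | eucl v <= 1]].

Definition wprod {R : realType} {d m n : nat} (B : 'I_m -> 'M[R]_d)
  (w : n.-tuple 'I_m) : 'M[R]_d := \prod_(j < n) B (tnth w j).

Definition jsr {R : realType} {d m : nat} (B : 'I_m -> 'M[R]_d) : R :=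
  limn (fun n : nat =>
    \big[Num.max/0]_(w : n.-tuple 'I_m) powR (opnorm (wprod B w)) (n%:R^-1)).

(* infinite sequences x = x_1 x_2 ...; x_k is represented by (x k.-1) *)
(* product B_{x_n} ... B_{x_1} *)
Definition xprod {R : realType} {d m : nat} (B : 'I_m -> 'M[R]_d)
  (x : nat -> 'I_m) (n : nat) : 'M[R]_d := \prod_(j < n) B (x (rev_ord j)).

Definition strongly_extremal {R : realType} {d m : nat} (B : 'I_m -> 'M[R]_d)
  (x : nat -> 'I_m) : Prop :=
  exists delta : R, 0 < delta /\
    forall n : nat, (1 <= n)%N -> delta * jsr B ^+ n <= opnorm (xprod B x n).

Definition very_weakly_extremal {R : realType} {d m : nat} (B : 'I_m -> 'M[R]_d)
  (x : nat -> 'I_m) : Prop :=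
  limn_esup (fun n : nat => (powR (opnorm (xprod B x n.+1)) (n.+1%:R^-1))%:E)
  = (jsr B)%:E.

Definition subword {m : nat} (x : nat -> 'I_m) (k n : nat) : seq 'I_m :=
  mkseq (fun i => x (k + i)%N) n.

Definition language {m : nat} (x : nat -> 'I_m) : set (seq 'I_m) :=
  [set w | exists k n : nat, (1 <= n)%N /\ w = subword x k n].

Definition recurrent {m : nat} (x : nat -> 'I_m) : Prop :=
  forall w, language x w -> forall N : nat, exists k : nat,
    (N <= k)%N /\ subword x k (size w) = w.

(* Main.v *)
Require Import Defs.
From HB Require Import structures.
From mathcomp Require Import all_boot all_order all_algebra.
From mathcomp Require Import all_classical all_reals all_analysis.
From mathcomp Require Import zify ring lra.
Set Implicit Arguments. Unset Strict Implicit. Unset Printing Implicit Defensive.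
Import Order.TTheory GRing.Theory Num.Theory.
Local Open Scope ring_scope.
Local Open Scope classical_set_scope.

Section LA.
Context {R : realType} {d : nat}.
Implicit Types (A : 'M[R]_d) (v : 'cV[R]_d).

Lemma eucl_ge0 v : 0 <= eucl v.
Proof. exact: sqrtr_ge0. Qed.

Lemma eucl_scale (c : R) v : eucl (c *: v) = `|c| * eucl v.
Proof.
rewrite /eucl.
under eq_bigr => i _ do rewrite mxE exprMn.
by rewrite -mulr_sumr sqrtrM ?sqr_ge0 // sqrtr_sqr.
Qed.

Lemma eucl0 : eucl (0 : 'cV[R]_d) = 0.
Proof. by rewrite -(scale0r (0 : 'cV[R]_d)) eucl_scale normr0 mul0r. Qed.

Lemma eucl_eq0 v : eucl v = 0 -> v = 0.
Proof.
move=> /eqP; rewrite /eucl sqrtr_eq0 => h.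
have hs : \sum_(i < d) v i 0 ^+ 2 = 0.
  by apply/eqP; rewrite eq_le h sumr_ge0 // => i _; rewrite sqr_ge0.
apply/matrixP => i j; rewrite ord1 mxE.
have /psumr_eq0P H := hs; have := H (fun i _ => sqr_ge0 (v i 0)) i isT.
by move/eqP; rewrite sqrf_eq0 => /eqP.
Qed.

Lemma coord_le v i : `|v i 0| <= eucl v.
Proof.
rewrite /eucl -sqrtr_sqr ler_sqrt ?sumr_ge0 // => [|j _]; last exact: sqr_ge0.
rewrite (bigD1 i) //= lerDl sumr_ge0 // => j _; exact: sqr_ge0.
Qed.

Definition Kb A : R := Num.sqrt (\sum_(i < d) (\sum_(j < d) `|A i j|) ^+ 2).

Lemma eucl_Av_bound A v : eucl v <= 1 -> eucl (A *m v) <= Kb A.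
Proof.
move=> hv; rewrite /eucl /Kb ler_sqrt; last by rewrite sumr_ge0 // => i _; exact: sqr_ge0.
apply: ler_sum => i _; rewrite mxE.
rewrite -[_ ^+ 2]ger0_norm ?sqr_ge0 // normrX lerXn2r ?nnegrE ?sumr_ge0 //.
apply: le_trans (ler_norm_sum _ _ _) _; apply: ler_sum => j _.
rewrite normrM ler_piMr //; exact: le_trans (coord_le v j) hv.
Qed.

Definition OS A := [set eucl (A *m v) | v in [set v : 'cV[R]_d | eucl v <= 1]].

Lemma OS_ub A : has_ubound (OS A).
Proof. by exists (Kb A) => _ [v hv <-]; exact: eucl_Av_bound. Qed.

Lemma OS_n0 A : OS A !=set0.
Proof. by exists (eucl (A *m 0)), 0 => //; rewrite /= eucl0. Qed.

Lemma opnorm_ub A v : eucl v <= 1 -> eucl (A *m v) <= opnorm A.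
Proof. by move=> hv; apply: (ub_le_sup (OS_ub A)); exists v. Qed.

Lemma opnorm_ge0 A : 0 <= opnorm A.
Proof. by have := opnorm_ub A (v := 0); rewrite mulmx0 eucl0 ler01 => /(_ isT). Qed.

Lemma opnorm_le A v : eucl (A *m v) <= opnorm A * eucl v.
Proof.
have [/eucl_eq0 ->|hv] := eqVneq (eucl v) 0.
  by rewrite mulmx0 eucl0 mulr0.
have hp : 0 < eucl v by rewrite lt_def hv eucl_ge0.
have := opnorm_ub A (v := (eucl v)^-1 *: v).
rewrite eucl_scale ger0_norm ?invr_ge0 ?eucl_ge0 // mulVf // lexx => /(_ isT).
rewrite -scalemxAr eucl_scale ger0_norm ?invr_ge0 ?eucl_ge0 // => h.
by rewrite -ler_pdivrMr // mulrC.
Qed.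

Lemma opnorm_mul A A' : opnorm (A *m A') <= opnorm A * opnorm A'.
Proof.
apply: ge_sup; first exact: OS_n0.
move=> _ [v hv <-]; rewrite -mulmxA.
apply: le_trans (opnorm_le _ _) _; apply: ler_wpM2l; first exact: opnorm_ge0.
apply: le_trans (opnorm_le _ _) _.
by rewrite -[X in _ <= X]mulr1 ler_wpM2l // opnorm_ge0.
Qed.

Lemma opnorm1 : opnorm (1%:M : 'M[R]_d) <= 1.
Proof.
apply: ge_sup; first exact: OS_n0.
by move=> _ [v hv <-]; rewrite mul1mx.
Qed.

Lemma opnorm_adh A : 0 < opnorm A ->
  exists v, eucl v <= 1 /\ opnorm A / 2 < eucl (A *m v).
Proof.
move=> h.
have e0 : 0 < opnorm A / 2 by rewrite divr_gt0.
have hs : has_sup (OS A) by split; [exact: OS_n0| exact: OS_ub].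
have [_ [v hv <-] hlt] := @sup_adherent _ (OS A) (opnorm A / 2) e0 hs.
exists v; split => //; move: hlt; rewrite /opnorm.
by rewrite [X in X - _](splitr (sup _)) addrK.
Qed.

End LA.

Section Words.
Context {m : nat}.

Lemma size_subword (z : nat -> 'I_m) k n : size (subword z k n) = n.
Proof. exact: size_mkseq. Qed.

Lemma subwordD (z : nat -> 'I_m) k n1 n2 :
  subword z k (n1 + n2) = subword z k n1 ++ subword z (k + n1) n2.
Proof.
rewrite /subword /mkseq iotaD map_cat; congr (_ ++ _).
rewrite add0n -[n1 in iota n1 _]addn0 iotaDl -map_comp; apply: eq_map => i /=; by rewrite addnA.
Qed.

Lemma take_subword (z : nat -> 'I_m) k n t : (t <= n)%N ->
  take t (subword z k n) = subword z k t.
Proof.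
move=> h; rewrite -(subnKC h) subwordD take_size_cat //; exact: size_subword.
Qed.

Lemma drop_subword (z : nat -> 'I_m) k n t : (t <= n)%N ->
  drop t (subword z k n) = subword z (k + t) (n - t).
Proof.
move=> h; rewrite -{1}(subnKC h) subwordD drop_size_cat //; exact: size_subword.
Qed.

Lemma subwordS (z : nat -> 'I_m) k n :
  subword z k n.+1 = rcons (subword z k n) (z (k + n)%N).
Proof. by rewrite -addn1 subwordD cats1 /subword /mkseq /= addn0. Qed.

End Words.

Section Prod.
Context {R : realType} {d m : nat} (B : 'I_m -> 'M[R]_d).

Definition sp (w : seq 'I_m) : 'M[R]_d := foldl (fun M a => B a *m M) 1%:M w.

Lemma foldl_sp (w : seq 'I_m) (M : 'M[R]_d) : foldl (fun M a => B a *m M) M w = sp w *m M.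
Proof.
elim: w M => [|a w IH] M /=; first by rewrite /sp /= mul1mx.
by rewrite IH /sp /= (IH (B a *m 1%:M)) mulmx1 mulmxA.
Qed.

Lemma sp_cat s t : sp (s ++ t) = sp t *m sp s.
Proof. by rewrite /sp foldl_cat foldl_sp. Qed.

Lemma sp_rcons s a : sp (rcons s a) = B a *m sp s.
Proof. by rewrite -cats1 sp_cat /sp /= mulmx1. Qed.

Lemma sp_nil : sp [::] = 1%:M. Proof. by []. Qed.

Lemma xprod_sp (z : nat -> 'I_m) n : xprod B z n = sp (subword z 0 n).
Proof.
elim: n => [|n IH]; first by rewrite /xprod big_ord0 /subword /=.
rewrite subwordS sp_rcons -IH /xprod big_ord_recl mulmxE /=.
congr (B (z _) * _); try by rewrite /= subn1.
Qed.

Definition beta := \sum_(a < m) opnorm (B a).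

Lemma opnormB_le a : opnorm (B a) <= beta.
Proof.
rewrite /beta (bigD1 a) //= lerDl sumr_ge0 // => i _; exact: opnorm_ge0.
Qed.

Lemma beta_ge0 : 0 <= beta.
Proof. by rewrite sumr_ge0 // => i _; exact: opnorm_ge0. Qed.

Lemma opnorm_sp (c : R) w : beta <= c -> opnorm (sp w) <= c ^+ size w.
Proof.
move=> hc; have c0 : 0 <= c := le_trans beta_ge0 hc.
elim/last_ind: w => [|w a IH]; first by rewrite sp_nil expr0 opnorm1.
rewrite sp_rcons size_rcons exprSr mulrC.
apply: le_trans (opnorm_mul _ _) _.
apply: ler_pM => //; try exact: opnorm_ge0.
exact: le_trans (opnormB_le a) hc.
Qed.

End Prod.

Section Chain.
Context {R : realType}.

Lemma chain (a : nat -> R) (g : R) (N M n : nat) :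
  1 <= g -> (0 < N)%N -> (forall j, 0 <= a j) ->
  (forall j t, a (j + t)%N <= g ^+ t * a j) ->
  (forall j, (M <= j)%N -> (j + N <= n)%N ->
     exists t, [/\ (0 < t)%N, (t <= N)%N & 2 * a (j + t)%N < a j]) ->
  forall j, (M <= j)%N -> (j <= n)%N ->
    2 ^+ ((n - j) %/ N) * a n <= g ^+ N * a j.
Proof.
move=> g1 N0 a0 H1 H2.
have g0 : 0 <= g by apply: le_trans g1.
suff: forall s j, (n - j <= s)%N -> (M <= j)%N -> (j <= n)%N ->
    2 ^+ ((n - j) %/ N) * a n <= g ^+ N * a j.
  by move=> H j; exact: H.
elim=> [|s IH] j hs hM hn.
  have -> : n = j by lia.
  by rewrite subnn div0n expr0 mul1r ler_peMl // exprn_ege1.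
have [hjN|hjN] := leqP (j + N) n; last first.
  have -> : ((n - j) %/ N = 0)%N by apply: divn_small; lia.
  rewrite expr0 mul1r; have -> : n = (j + (n - j))%N by lia.
  apply: le_trans (H1 _ _) _; apply: ler_wpM2r => //; apply: ler_weXn2l => //; lia.
have [t [t0 tN ht]] := H2 j hM hjN.
have := IH (j + t)%N ltac:(lia) ltac:(lia) ltac:(lia) => IHk.
apply: le_trans (_ : 2 * (g ^+ N * a (j + t)%N) <= _); last first.
  rewrite mulrCA ler_wpM2l ?exprn_ge0 //; exact: ltW.
apply: le_trans (_ : 2 * (2 ^+ ((n - (j + t)) %/ N) * a n) <= _); last first.
  by rewrite ler_wpM2l.
have hk : ((n - j) %/ N <= ((n - (j + t)) %/ N).+1)%N.
  have: (n - j <= (n - (j + t)) + N)%N by lia.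
  move=> h; have := leq_div2r N h.
  by rewrite addnC -{2}(mul1n N) divnMDl // add1n.
rewrite mulrA -exprS ler_wpM2r // ler_weXn2l //; lra.
Qed.

End Chain.

Section Good.
Context {R : realType} {d m : nat} (B : 'I_m -> 'M[R]_d) (rho : R).

Definition gword (w : seq 'I_m) :=
  forall k, (1 <= k <= size w)%N -> rho ^+ k / 2 <= opnorm (sp B (take k w)).

Definition DW (z : nat -> 'I_m) :=
  forall N M, exists i, (M <= i)%N /\ gword (subword z i N).

Definition Qg (z : nat -> 'I_m) := forall N, gword (subword z 0 N).

Lemma gword_take w t : gword w -> gword (take t w).
Proof.
move=> h k /andP[k1 k2]; rewrite size_take_min in k2.
have kt : (k <= t)%N by lia.
rewrite take_takel //; apply: h; rewrite k1 /=; lia.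
Qed.

Definition gam := (beta B + rho) / rho.

Hypothesis hr : 0 < rho.

Lemma gam_ge1 : 1 <= gam.
Proof. by rewrite /gam ler_pdivlMr // mul1r lerDr beta_ge0. Qed.

Lemma vsplit (z : nat -> 'I_m) (u : 'cV[R]_d) j t :
  sp B (subword z 0 (j + t)) *m u = sp B (subword z j t) *m (sp B (subword z 0 j) *m u).
Proof. by rewrite subwordD add0n sp_cat mulmxA. Qed.

Lemma DW_of_HZ (z : nat -> 'I_m) :
  (forall N M, (0 < N)%N -> exists n (u : 'cV[R]_d), [/\ (M <= n)%N, eucl u <= 1 &
     gam ^+ (N + M) * rho ^+ n < 2 ^+ ((n - M) %/ N) * eucl (sp B (subword z 0 n) *m u)]) ->
  DW z.
Proof.
move=> HZ N M.
have [->|N0] := posnP N.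
  by exists M; split => // k; rewrite size_subword; lia.
apply: contrapT => nex.
have [n [u [Mn u1 hn]]] := HZ N M N0.
pose v j := sp B (subword z 0 j) *m u.
pose a j := eucl (v j) / rho ^+ j.
have rj j : 0 < rho ^+ j by rewrite exprn_gt0.
have a0 j : 0 <= a j by rewrite divr_ge0 ?eucl_ge0 // ltW.
have H1 j t : a (j + t)%N <= gam ^+ t * a j.
  rewrite /a /v vsplit.
  have h1 := opnorm_le (sp B (subword z j t)) (sp B (subword z 0 j) *m u).
  have hbb : beta B <= beta B + rho by rewrite lerDl ltW.
  have h2 := opnorm_sp (subword z j t) hbb.
  rewrite size_subword in h2.
  set e := eucl (sp B (subword z 0 j) *m u) in h1 *.
  have e0 : 0 <= e by exact: eucl_ge0.
  apply: le_trans (_ : ((beta B + rho) ^+ t * e) / rho ^+ (j + t) <= _).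
    rewrite ler_pM2r ?invr_gt0 //; apply: le_trans h1 _; exact: ler_wpM2r.
  rewrite /gam expr_div_n exprD; rewrite le_eqVlt.
  apply/orP; left; apply/eqP; field.
  by rewrite !expf_neq0 // gt_eqF.
have apos j : (j <= n)%N -> 0 < a j.
  move=> jn; rewrite lt_def a0 andbT; apply/negP => /eqP aj0.
  have := H1 j (n - j)%N; rewrite subnKC // aj0 mulr0 => han.
  have an0 : a n = 0 by apply/eqP; rewrite eq_le han a0.
  have : eucl (v n) = 0.
    by move: an0; rewrite /a => /eqP; rewrite mulf_eq0 invr_eq0 (gt_eqF (rj n)) orbF => /eqP.
  move=> e0; move: hn; rewrite -/(v n) e0 mulr0 => hn.
  have : 0 < gam ^+ (N + M) * rho ^+ n.
    by rewrite mulr_gt0 // exprn_gt0 // (lt_le_trans ltr01 gam_ge1).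
  lra.
have H2 j : (M <= j)%N -> (j + N <= n)%N ->
    exists t, [/\ (0 < t)%N, (t <= N)%N & 2 * a (j + t)%N < a j].
  move=> Mj jN.
  have ng : ~ gword (subword z j N) by move=> hg; apply: nex; exists j.
  have [k [hk hlt]] : exists k, (1 <= k <= N)%N /\
      opnorm (sp B (subword z j k)) < rho ^+ k / 2.
    apply: contrapT => hne; apply: ng => k hk; rewrite size_subword in hk.
    rewrite leNgt; apply/negP => hlt; apply: hne; exists k; split => //.
    by rewrite -(take_subword z j (_ : k <= N)%N) //; case/andP: hk.
  exists k; split; [by case/andP: hk|by case/andP: hk|].
  have ajp := apos j ltac:(lia).
  have ej : 0 < eucl (v j).
    by move: ajp; rewrite /a pmulr_lgt0 // invr_gt0.
  have h1 := opnorm_le (sp B (subword z j k)) (v j).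
  have : 2 * eucl (v (j + k)%N) < rho ^+ k * eucl (v j).
    rewrite /v vsplit -/(v j).
    apply: le_lt_trans (_ : 2 * (opnorm (sp B (subword z j k)) * eucl (v j)) < _).
      by rewrite ler_pM2l.
    rewrite mulrA ltr_pM2r // mulrC -ltr_pdivlMr //.
  move=> h2.
  rewrite /a.
  apply: lt_le_trans (_ : rho ^+ k * eucl (v j) / rho ^+ (j + k) <= _).
    by rewrite mulrA ltr_pM2r // invr_gt0.
  rewrite le_eqVlt; apply/orP; left; apply/eqP; rewrite exprD; field.
  by rewrite !expf_neq0 // gt_eqF.
have gN0 : 1 <= gam := gam_ge1.
have := chain gam_ge1 N0 a0 H1 H2 (leqnn M) Mn.
have := H1 0%N M; rewrite add0n => hM.
have a0le : a 0%N <= 1.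
  by rewrite /a expr0 divr1 /v /subword /= mul1mx.
move=> hc.
have hb : 2 ^+ ((n - M) %/ N) * a n <= gam ^+ (N + M).
  apply: le_trans hc _; rewrite exprD; apply: ler_wpM2l; first by rewrite exprn_ge0 // (le_trans ler01).
  apply: le_trans hM _; rewrite -[X in _ <= X]mulr1; apply: ler_wpM2l => //.
  by rewrite exprn_ge0 // (le_trans ler01).
move: hn; rewrite -/(v n).
have -> : eucl (v n) = a n * rho ^+ n by rewrite /a mulfVK // gt_eqF.
rewrite mulrA ltr_pM2r //; lra.
Qed.

End Good.

Section Limsup.
Context {R : realType}.

Lemma esup_inf (u : nat -> \bar R) :
  limn_esup u = ereal_inf (range (esups u)).
Proof. by rewrite limn_esup_lim; apply/cvg_lim => //; exact: cvg_esups_inf. Qed.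

Lemma limsup_ext (u : nat -> \bar R) (l c : R) : limn_esup u = l%:E -> c < l ->
  forall n0, exists n, (n0 <= n)%N /\ (c%:E < u n)%E.
Proof.
rewrite esup_inf => hl cl n0.
have h1 : (l%:E <= esups u n0)%E by rewrite -hl; apply: ereal_inf_lbound; exists n0.
have h2 : (c%:E < ereal_sup (sdrop u n0))%E.
  by apply: lt_le_trans h1; rewrite lte_fin.
have [_ [k hk <-] hlt] := ereal_sup_gt h2.
by exists k.
Qed.

Lemma limsup_ge0 (u : nat -> \bar R) : (forall n, (0 <= u n)%E) -> (0 <= limn_esup u)%E.
Proof.
move=> h; rewrite esup_inf; apply: le_ereal_inf_tmp => _ [n _ <-].
apply: le_trans (h n) _; apply: ereal_sup_ubound; exists n => //=.
Qed.

End Limsup.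

Section HZ.
Context {R : realType} {d m : nat} (B : 'I_m -> 'M[R]_d) (rho : R).
Hypothesis hr : 0 < rho.

Definition HZ (z : nat -> 'I_m) :=
  forall N M, (0 < N)%N -> exists n (u : 'cV[R]_d), [/\ (M <= n)%N, eucl u <= 1 &
     gam B rho ^+ (N + M) * rho ^+ n < 2 ^+ ((n - M) %/ N) * eucl (sp B (subword z 0 n) *m u)].

Lemma gam_gt0 : 0 < gam B rho.
Proof. exact: lt_le_trans ltr01 (gam_ge1 B hr). Qed.

Lemma two_pow_gt (x : R) : exists q : nat, (0 < q)%N /\ x < 2 ^+ q.
Proof.
have [x0|x0] := leP 0 x; last by exists 1%N; split => //; lra.
exists (Num.bound x).+1; split => //.
apply: lt_trans (archi_boundP x0) _.
have := ltn_expl (Num.bound x).+1 (isT : (1 < 2)%N).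
rewrite -(ltr_nat R) natrX => h; apply: lt_trans h; rewrite ltr_nat //.
Qed.

Lemma HZ_of_Q z : Qg B rho z -> HZ z.
Proof.
move=> hQ N M N0.
have [q [q0 hq]] := two_pow_gt (4 * gam B rho ^+ (N + M)).
pose n := (M + q * N)%N.
have n1 : (1 <= n)%N by rewrite /n; nia.
have := hQ n n; rewrite size_subword n1 leqnn take_subword // => /(_ isT) hO.
have Op : 0 < opnorm (sp B (subword z 0 n)).
  by apply: (lt_le_trans _ hO); rewrite divr_gt0 // exprn_gt0.
have [u [u1 hu]] := opnorm_adh Op.
exists n, u; split => //; first by rewrite /n leq_addr.
have -> : ((n - M) %/ N = q)%N by rewrite /n addKn mulnK.
have P0 : 0 < rho ^+ n by rewrite exprn_gt0.
have G0 : 0 < gam B rho ^+ (N + M) by rewrite exprn_gt0 // gam_gt0.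
set G := gam B rho ^+ (N + M) in hq G0 *.
set P := rho ^+ n in hO P0 *.
set T := 2 ^+ q in hq *.
set E := eucl _ in hu *.
set O := opnorm _ in hO hu Op.
nra.
Qed.

Lemma three_halves (q : nat) : q%:R / 2 <= (3 / 2 : R) ^+ q.
Proof.
elim: q => [|q IH]; first by rewrite mul0r expr0 ler01.
rewrite exprS -natr1.
have : 1 <= (3 / 2 : R) ^+ q by rewrite exprn_ege1 //; lra.
lra.
Qed.

Lemma HZ_of_vwe x : very_weakly_extremal B x -> jsr B = rho -> HZ x.
Proof.
rewrite /very_weakly_extremal => hv hj N M N0; rewrite hj in hv.
pose lam := powR (3 / 4 : R) (N%:R^-1).
have l0 : 0 < lam by rewrite powR_gt0 //; lra.
have lN : lam ^+ N = 3 / 4.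
  rewrite /lam -powR_mulrn; last by rewrite powR_ge0.
  by rewrite -powRrM mulVf ?pnatr_eq0 -?lt0n // powRr1 //; lra.
have l1 : lam < 1.
  rewrite ltNge; apply/negP => h; have := exprn_ege1 N h; rewrite lN; lra.
have G0 : 0 < gam B rho ^+ (N + M) by rewrite exprn_gt0 // gam_gt0.
pose C := gam B rho ^+ (N + M) * 4 / lam ^+ (M + N).
have C0 : 0 <= C.
  rewrite /C; apply: divr_ge0; first by apply: mulr_ge0; [exact: ltW|lra].
  by apply: exprn_ge0; exact: ltW.
pose Q0 := Num.bound (4 * C).
have hQ0 : 4 * C < Q0%:R by apply: archi_boundP; rewrite mulr_ge0.
have lr : lam * rho < rho by rewrite gtr_pMl.
have [n' [hn' hlt]] := limsup_ext hv lr (M + N * Q0).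
pose n := n'.+1.
rewrite lte_fin in hlt.
set o := opnorm (xprod B x n'.+1) in hlt.
have o0 : 0 <= o by exact: opnorm_ge0.
have hon : (lam * rho) ^+ n < o.
  have lr0 : 0 <= lam * rho by rewrite mulr_ge0 // ltW.
  have r0 : 0 < (n%:R : R) by rewrite ltr0n.
  have := @gt0_ltr_powR _ n%:R r0 (lam * rho) (powR o n'.+1%:R^-1).
  rewrite !nnegrE powR_ge0 lr0 => /(_ isT isT hlt).
  rewrite powR_mulrn // -powRrM mulVf ?pnatr_eq0 // powRr1 //.
have Op : 0 < o by apply: le_lt_trans hon; rewrite exprn_ge0 // mulr_ge0 // ltW.
rewrite /o xprod_sp in Op hon.
have [u [u1 hu]] := opnorm_adh Op.
exists n, u; split => //; first by rewrite /n; clear -hn'; lia.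
set q := ((n - M) %/ N)%N.
have hq1 : (Q0 <= q)%N.
  rewrite /q; have : (N * Q0 <= n - M)%N by rewrite /n; clear -hn'; lia.
  by move=> h; have := leq_div2r N h; rewrite mulKn.
have hq2 : (n <= M + N + q * N)%N.
  have := divn_eq (n - M) N; have := ltn_pmod (n - M) N0; rewrite -/q.
  have hn'' : (M <= n)%N by rewrite /n; clear -hn'; lia.
  clear -hn''; lia.
have hlam : lam ^+ (M + N) * (3 / 4) ^+ q <= lam ^+ n.
  rewrite -lN -exprM -exprD; apply: ler_wiXn2l; [exact: ltW|exact: ltW|].
  by rewrite mulnC.
have hq3 : q%:R / 2 <= (3 / 2 : R) ^+ q := three_halves q.
have hq4 : Q0%:R <= (q%:R : R) by rewrite ler_nat.
have P0 : 0 < rho ^+ n by rewrite exprn_gt0.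
have L0 : 0 < lam ^+ (M + N) by rewrite exprn_gt0.
have hC : C * lam ^+ (M + N) = gam B rho ^+ (N + M) * 4.
  by rewrite /C mulfVK // gt_eqF.
have key : (2 : R) ^+ q * (3 / 4) ^+ q = (3 / 2) ^+ q.
  by rewrite -exprMn; congr (_ ^+ _); lra.
rewrite exprMn in hon.
set E := eucl _ in hu *.
set O := opnorm _ in hu hon Op.
set T := (2 : R) ^+ q in key *.
set F := (3 / 4 : R) ^+ q in hlam key *.
set H := (3 / 2 : R) ^+ q in hq3 key.
set Ln := lam ^+ n in hon hlam.
set L := lam ^+ (M + N) in hlam hC L0.
set G := gam B rho ^+ (N + M) in hC G0 *.
set P := rho ^+ n in hon P0 *.
have T0 : 0 < T by rewrite exprn_gt0.
have F0 : 0 < F by rewrite exprn_gt0 //; lra.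
have s1 : T * (L * F * P) < T * (2 * E).
  rewrite ltr_pM2l //; apply: le_lt_trans (_ : Ln * P < _); first by rewrite ler_pM2r.
  lra.
have s2 : H * L * P = T * (L * F * P) by rewrite -key; ring.
have s3 : 2 * C < H by lra.
have s4 : 2 * C * L * P < H * L * P by rewrite ltr_pM2r // ltr_pM2r.
have s5 : 2 * C * L * P = 8 * G * P.
  by rewrite -(mulrA 2 C L) hC; ring.
have GP0 : 0 < G * P by rewrite mulr_gt0.
lra.
Qed.

End HZ.

Section Koenig.
Context {m : nat}.

Lemma koenig (Inv : seq 'I_m -> Prop) (a0 : 'I_m) : Inv [::] ->
  (forall p, Inv p -> exists a, Inv (rcons p a)) ->
  exists z : nat -> 'I_m, forall n, Inv (subword z 0 n).
Proof.
move=> I0 Iext.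
have h : forall p, exists a, Inv p -> Inv (rcons p a).
  move=> p; have [ip|nip] := pselect (Inv p).
    by have [a ha] := Iext p ip; exists a.
  by exists a0.
have [f hf] := choice h.
pose pre := fix pre n := if n is k.+1 then rcons (pre k) (f (pre k)) else [::].
exists (fun n => f (pre n)).
have e n : pre n = subword (fun n => f (pre n)) 0 n.
  elim: n => [//|n IH]; by rewrite subwordS /= -IH add0n.
move=> n; rewrite -e; elim: n => [//|n IH] /=; exact: hf.
Qed.

Lemma lang_sub (z : nat -> 'I_m) k n : (1 <= n)%N -> language z (subword z k n).
Proof. by move=> h; exists k, n. Qed.

Lemma omega_lang (y y' : nat -> 'I_m) :
  (forall L M, exists i, (M <= i)%N /\ subword y i L = subword y' 0 L) ->
  forall w, language y' w -> forall N, exists k, (N <= k)%N /\ subword y k (size w) = w.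
Proof.
move=> hom _ [k [n [n1 ->]]] N.
have [i [Ni hi]] := hom (k + n)%N N.
exists (i + k)%N; split; first lia.
rewrite size_subword.
have := congr1 (drop k) hi; rewrite !drop_subword ?leq_addr // addKn add0n => ->.
by [].
Qed.

Lemma omega_sub (y y' : nat -> 'I_m) :
  (forall L M, exists i, (M <= i)%N /\ subword y i L = subword y' 0 L) ->
  language y' `<=` language y.
Proof.
move=> hom w hw; have [k [_ hk]] := omega_lang hom hw 0.
have [k' [n [n1 hw']]] := hw.
by exists k, (size w); split; [rewrite hw' size_subword|].
Qed.

End Koenig.

Section Omega.
Context {R : realType} {d m : nat} (B : 'I_m -> 'M[R]_d) (rho : R).

Lemma omega_lim (y : nat -> 'I_m) : DW B rho y ->
  exists y', Qg B rho y' /\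
    forall L M, exists i, (M <= i)%N /\ subword y i L = subword y' 0 L.
Proof.
move=> hD.
pose Inv (p : seq 'I_m) := forall N M, exists i, [/\ (M <= i)%N,
   gword B rho (subword y i (N + size p)) & subword y i (size p) = p].
have I0 : Inv [::].
  move=> N M; have [i [Mi hi]] := hD N M; exists i; split => //.
  by rewrite addn0.
have Iext p : Inv p -> exists a, Inv (rcons p a).
  move=> ip; apply: contrapT => nex.
  have h a : exists NM : nat * nat, ~ exists i, [/\ (NM.2 <= i)%N,
      gword B rho (subword y i (NM.1 + size (rcons p a)))
      & subword y i (size (rcons p a)) = rcons p a].
    apply: contrapT => hne; apply: nex; exists a => N M.
    apply: contrapT => hn2; apply: hne; exists (N, M) => //.
  have [f hf] := choice h.
  pose Nm := (\max_(a < m) (f a).1)%N.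
  pose Mm := (\max_(a < m) (f a).2)%N.
  have [i [Mi hg hp]] := ip Nm.+1 Mm.
  pose a := y (i + size p)%N.
  apply: (hf a); exists i; split.
  - apply: leq_trans Mi; exact: leq_bigmax.
  - have hle : ((f a).1 + size (rcons p a) <= Nm.+1 + size p)%N.
      rewrite size_rcons; have := @leq_bigmax _ (fun a => (f a).1) a; rewrite -/Nm; clear; lia.
    by have := gword_take (t := ((f a).1 + size (rcons p a))%N) hg; rewrite take_subword.
  - by rewrite size_rcons subwordS hp.
have a0 : 'I_m := y 0%N.
have [y' hy'] := koenig a0 I0 Iext.
exists y'; split.
  move=> N; have [i [_ hg hs]] := hy' N 0%N 0%N.
  by rewrite size_subword in hs hg; rewrite add0n hs in hg.
move=> L M; have [i [Mi _ hs]] := hy' L 0%N M.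
by exists i; rewrite size_subword in hs.
Qed.

End Omega.

Lemma max_chain {T : Type} {m : nat} (Rp : T -> T -> Prop) (A : set T) :
  total_on A Rp -> (forall t, Rp t t) -> (forall r s t, Rp r s -> Rp s t -> Rp r t) ->
  forall (f : 'I_m -> T) x0, A x0 -> (forall a, A (f a)) ->
  exists t, A t /\ forall a, Rp (f a) t.
Proof.
move=> tot refl trans f x0 Ax0 Af.
suff: forall k, (k <= m)%N -> exists t, A t /\ forall a : 'I_m, (a < k)%N -> Rp (f a) t.
  by move=> /(_ m (leqnn m)) [t [At ht]]; exists t; split => // a; exact: ht.
elim=> [|k IH] km; first by exists x0; split.
have [t [At ht]] := IH (ltnW km).
pose ak : 'I_m := Ordinal km.
have [h|h] := tot t (f ak) At (Af ak).
- exists (f ak); split => // a; rewrite ltnS leq_eqVlt => /orP[/eqP e|lt].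
    by have -> : a = ak by apply: val_inj.
  by apply: trans (ht a lt) h.
- exists t; split => // a; rewrite ltnS leq_eqVlt => /orP[/eqP e|lt].
    by have -> : a = ak by apply: val_inj.
  exact: ht.
Qed.

Section ZornPart.
Context {R : realType} {d m : nat} (B : 'I_m -> 'M[R]_d) (rho : R).

Definition Good (Lg : set (seq 'I_m)) (p : seq 'I_m) :=
  forall N, exists w, [/\ Lg w, gword B rho w, (N <= size w)%N & take (size p) w = p].

Lemma good_step Lg p (a0 : 'I_m) : Good Lg p -> exists a, Good Lg (rcons p a).
Proof.
move=> hg; apply: contrapT => nex.
have h a : exists N, ~ exists w, [/\ Lg w, gword B rho w, (N <= size w)%N &
    take (size (rcons p a)) w = rcons p a].
  apply: contrapT => hne; apply: nex; exists a => N.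
  apply: contrapT => hn2; apply: hne; exists N => //.
have [f hf] := choice h.
pose Nm := (\max_(a < m) f a)%N.
have [w [Lw gw sw tw]] := hg (Nm + size p).+1.
pose a := nth a0 w (size p).
apply: (hf a); exists w; split => //.
  have := @leq_bigmax _ f a; rewrite -/Nm; clear -sw; lia.
rewrite size_rcons (take_nth a0); first by rewrite tw.
clear -sw; lia.
Qed.

Lemma good_mono (L1 L2 : set (seq 'I_m)) p : L1 `<=` L2 -> Good L1 p -> Good L2 p.
Proof.
move=> s h N; have [w [a b c e]] := h N; exists w; split => //; exact: s.
Qed.

Lemma zorn_min (x : nat -> 'I_m) :
  (exists z, Qg B rho z /\ language z `<=` language x) ->
  exists y, [/\ Qg B rho y, language y `<=` language x &
    forall z, Qg B rho z -> language z `<=` language y -> language z = language y].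
Proof.
move=> [z0 [Qz0 Lz0]].
pose P (z : nat -> 'I_m) := Qg B rho z /\ language z `<=` language x.
pose T := {Lg : set (seq 'I_m) | exists z, P z /\ language z = Lg}.
pose Rb (s t : T) : bool := `[< proj1_sig t `<=` proj1_sig s >].
have Rrefl t : Rb t t by apply/asboolP.
have Rtrans r s t : Rb r s -> Rb s t -> Rb r t.
  by move=> /asboolP h1 /asboolP h2; apply/asboolP; exact: subset_trans h2 h1.
have Ranti s t : Rb s t -> Rb t s -> s = t.
  case: s => [Ls ps]; case: t => [Lt pt] /asboolP h1 /asboolP h2.
  by apply/eq_exist/seteqP; split.
have Rchain (A : set T) : total_on A Rb -> exists t, forall s, A s -> Rb s t.
  move=> tot.
  have [[s0 As0]|nA] := pselect (exists s, A s); last first.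
    exists (exist _ (language z0) (ex_intro _ z0 (conj (conj Qz0 Lz0) erefl))).
    by move=> s As; exfalso; apply: nA; exists s.
  have [zs0 [[Qs0 Ls0x] es0]] := proj2_sig s0.
  have a0 : 'I_m := zs0 0%N.
  pose Inv p := forall s, A s -> Good (proj1_sig s) p.
  have I0 : Inv [::].
    move=> [Lg [zs [[Qs _] e]]] _ N /=; rewrite -e; exists (subword zs 0 N.+1); split.
    - exact: lang_sub.
    - exact: Qs.
    - by rewrite size_subword.
    - by rewrite take0.
  have Iext p : Inv p -> exists a, Inv (rcons p a).
    move=> ip; apply: contrapT => nex.
    have h a : exists s, A s /\ ~ Good (proj1_sig s) (rcons p a).
      apply: contrapT => hne; apply: nex; exists a => s As.
      apply: contrapT => hn2; apply: hne; exists s => //.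
    have [fs hfs] := choice h.
    have [t [At ht]] := @max_chain _ _ (fun s t => Rb s t) A tot Rrefl Rtrans fs s0 As0
      (fun a => (hfs a).1).
    have [a ha] := good_step a0 (ip t At).
    apply: (hfs a).2; apply: good_mono ha; exact/asboolP/ht.
  have [z hz] := koenig a0 I0 Iext.
  have Qz : Qg B rho z.
    move=> N; have [w [_ gw sw tw]] := hz N s0 As0 N.
    by rewrite size_subword in tw; rewrite -tw; exact: gword_take.
  have Lzs s : A s -> language z `<=` proj1_sig s.
    move=> As; have [zs [_ e]] := proj2_sig s; rewrite -e => _ [k [n [n1 ->]]].
    have [w [Lw _ sw tw]] := hz (k + n)%N s As (k + n)%N.
    rewrite -e in Lw.
    move: Lw tw sw => /= [i [l [l1 ->]]]; rewrite size_subword !size_subword => tw sw.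
    rewrite take_subword // in tw.
    have := congr1 (drop k) tw; rewrite !drop_subword ?leq_addr // addKn add0n => e2.
    by exists (i + k)%N, n; split => //; rewrite e2.
  have Lzx : language z `<=` language x.
    apply: subset_trans (Lzs _ As0) _; rewrite -es0; exact: Ls0x.
  exists (exist _ (language z) (ex_intro _ z (conj (conj Qz Lzx) erefl))).
  by move=> s As; apply/asboolP; exact: Lzs.
have [[Lg [y [[Qy Lyx] eLy]]] ht] := Zorn Rrefl Rtrans Ranti Rchain.
exists y; split => // z Qz hzy.
have Pz : P z by split => //; exact: subset_trans hzy Lyx.
have := ht (exist _ (language z) (ex_intro _ z (conj Pz erefl))).
move=> /(_ ltac:(apply/asboolP => /=; rewrite -eLy; exact: hzy)) e.
by move: (congr1 (@proj1_sig _ _) e) => /= ->.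
Qed.

End ZornPart.

Lemma DW_zero {R : realType} {d m : nat} (B : 'I_m -> 'M[R]_d) z : DW B 0 z.
Proof.
move=> N M; exists M; split => // k /andP[k1 _].
by rewrite expr0n; case: k k1 => // k _; rewrite /= mul0r opnorm_ge0.
Qed.

Theorem lemma2 (R : realType) (d m : nat) (B : 'I_m -> 'M[R]_d)
  (x : nat -> 'I_m) :
  very_weakly_extremal B x ->
  exists y : nat -> 'I_m,
    [/\ recurrent y, strongly_extremal B y & language y `<=` language x].
Proof.
move=> hv.
have r0 : 0 <= jsr B.
  have h : forall n, (0 <= (powR (opnorm (xprod B x n.+1)) (n.+1%:R^-1))%:E)%E.
    by move=> n; rewrite lee_fin powR_ge0.
  by have := limsup_ge0 h; rewrite hv lee_fin.
set rho := jsr B in r0.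
have hDWQ z : Qg B rho z -> DW B rho z.
  move=> hQ; case: (ltrP 0 rho) => [rp|rle].
    exact: DW_of_HZ (HZ_of_Q rp hQ).
  have -> : rho = 0 by apply/eqP; rewrite eq_le rle r0.
  exact: DW_zero.
have hDWx : DW B rho x.
  case: (ltrP 0 rho) => [rp|rle].
    exact: DW_of_HZ (HZ_of_vwe rp hv erefl).
  have -> : rho = 0 by apply/eqP; rewrite eq_le rle r0.
  exact: DW_zero.
have [z0 [Qz0 om0]] := omega_lim hDWx.
have [y [Qy Lyx ymin]] := zorn_min (ex_intro _ z0 (conj Qz0 (omega_sub om0))).
have [y' [Qy' om']] := omega_lim (hDWQ y Qy).
have ey : language y' = language y := ymin y' Qy' (omega_sub om').
exists y; split => //.
- by move=> w hw; apply: (omega_lang om'); rewrite ey.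
- exists (1 / 2); split; first lra.
  move=> n n1; have := Qy n n; rewrite size_subword n1 leqnn take_subword // => /(_ isT).
  by rewrite xprod_sp -/rho mulrC mul1r.
Qed.
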